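(* Let $p(m,n)$ be as defined in the context, and let $x^N_0,y^N_0\in N^{-1}\mathbb{Z}_{>0}$ with $x^N_0\to x_0>0$ and $y^N_0\to y_0>0$ as $N\to\infty$. If $x_0\ne y_0$, then $$\lim_{N\to\infty}p(Nx^N_0,Ny^N_0)=\mathbf 1_{\{x_0<y_0\}}.$$
   Context: For integers $m,n\ge0$ with $m+n>0$, $p(m,n)$ is the unique function satisfying $p(m,n)=\frac{n}{m+n}p(m-1,n)+\frac{m}{m+n}p(m,n-1)$ for $m,n>0$, with $p(m,0)=0$ for $m>0$ and $p(0,n)=1$ for $n>0$. It is the probability that player A (starting with $m$ units) is ruined before player B (starting with $n$ units) when, from state $(m,n)$, B loses a unit with probability $m/(m+n)$ and A loses a unit with probability $n/(m+n)$. *)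

(* Defs.v *)
From Stdlib Require Import Reals.
Open Scope R_scope.

(* p(m,n) of the paper, defined by the recursion
     p(m,n) = n/(m+n) p(m-1,n) + m/(m+n) p(m,n-1)  (m,n>0),
     p(m,0) = 0 (m>0),  p(0,n) = 1 (n>0).
   The value p(0,0) is not defined in the paper; here it is (junk) 1. *)
Fixpoint p (m : nat) : nat -> R :=
  match m with
  | O => fun _ => 1
  | S m' =>
      fix q (n : nat) : R :=
        match n with
        | O => 0
        | S n' =>
            INR n / (INR m + INR n) * p m' n
            + INR m / (INR m + INR n) * q n'
        end
  end.

Definition ind_lt (x y : R) : R := if Rlt_dec x y then 1 else 0.

Lemma p_rec (m n : nat) : (0 < m)%nat -> (0 < n)%nat ->
  p m n = INR n / (INR m + INR n) * p (m - 1) n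
          + INR m / (INR m + INR n) * p m (n - 1).
Proof.
  destruct m as [|m']; [intro H; inversion H|].
  destruct n as [|n']; [intros _ H; inversion H|].
  intros _ _. simpl (S m' - 1)%nat. simpl (S n' - 1)%nat.
  rewrite Nat.sub_0_r, Nat.sub_0_r. reflexivity.
Qed.

(* Main.v *)
Require Import Defs.
From Stdlib Require Import Reals Lra Lia ZArith.
Open Scope R_scope.

Lemma nat_unbounded (r : R) : exists n : nat, r < INR n.
Proof.
  destruct (archimed (Rabs r)) as [H _].
  assert (Hz : (0 <= up (Rabs r))%Z).
  { apply le_IZR. pose proof (Rabs_pos r). lra. }
  exists (Z.to_nat (up (Rabs r))).
  rewrite INR_IZR_INZ, Z2Nat.id by exact Hz.
  pose proof (Rle_abs r). lra.
Qed.

Lemma p_SS m n : p (S m) (S n) =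
  INR (S n) / (INR (S m) + INR (S n)) * p m (S n)
  + INR (S m) / (INR (S m) + INR (S n)) * p (S m) n.
Proof. reflexivity. Qed.

Lemma p_nonneg m : forall n, 0 <= p m n.
Proof.
  induction m as [|m IHm]; intro n.
  - simpl; lra.
  - induction n as [|n IHn].
    + simpl; lra.
    + rewrite p_SS.
      assert (0 < INR (S m)) by (apply lt_0_INR; lia).
      assert (0 < INR (S n)) by (apply lt_0_INR; lia).
      assert (0 <= INR (S n) / (INR (S m) + INR (S n))) by (apply Rlt_le, Rdiv_lt_0_compat; lra).
      assert (0 <= INR (S m) / (INR (S m) + INR (S n))) by (apply Rlt_le, Rdiv_lt_0_compat; lra).
      specialize (IHm (S n)).
      nra.
Qed.

Lemma p_sym k : forall m n, (m + n = k)%nat -> (0 < k)%nat -> p m n + p n m = 1.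
Proof.
  induction k as [|k IH]; intros m n Hk Hpos; [lia|].
  destruct m as [|m]; destruct n as [|n].
  - lia.
  - simpl. lra.
  - simpl. lra.
  - rewrite (p_SS m n), (p_SS n m).
    assert (E1 : p m (S n) + p (S n) m = 1) by (apply IH; lia).
    assert (E2 : p (S m) n + p n (S m) = 1) by (apply IH; lia).
    assert (0 < INR (S m)) by (apply lt_0_INR; lia).
    assert (0 < INR (S n)) by (apply lt_0_INR; lia).
    replace (p (S n) m) with (1 - p m (S n)) by lra.
    replace (p n (S m)) with (1 - p (S m) n) by lra.
    field. lra.
Qed.

Definition Wr (x y : R) := x*x - y*y - x - y.
Definition phi (u : R) := Rmax 0 u * Rmax 0 u.

Lemma phi_nonneg u : 0 <= phi u.
Proof. unfold phi. apply Rle_0_sqr. Qed.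

Lemma phi_ineq u d : phi (u - d) <= phi u - 2 * Rmax 0 u * d + d * d.
Proof.
  unfold phi.
  destruct (Rle_dec 0 u); destruct (Rle_dec 0 (u - d)).
  - rewrite !Rmax_right by lra. nra.
  - rewrite (Rmax_right 0 u) by lra. rewrite (Rmax_left 0 (u-d)) by lra. nra.
  - rewrite (Rmax_left 0 u) by lra. rewrite (Rmax_right 0 (u-d)) by lra. nra.
  - rewrite !Rmax_left by lra. nra.
Qed.

Lemma le_div_l a b c : 0 < c -> a <= b * c -> a / c <= b.
Proof.
  intros Hc H. apply (Rmult_le_reg_r c); [lra|].
  unfold Rdiv; rewrite Rmult_assoc, Rinv_l by lra; lra.
Qed.

Lemma le_div_r a b c : 0 < c -> a * c <= b -> a <= b / c.
Proof.
  intros Hc H. apply (Rmult_le_reg_r c); [lra|].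
  unfold Rdiv; rewrite Rmult_assoc, Rinv_l by lra; lra.
Qed.

Lemma step x y A S : 0 < A -> 1 <= x -> 1 <= y -> 4*x*x <= S -> 4*y*y <= S ->
  y/(x+y) * ((phi (A - Wr (x-1) y) + S*((x-1)+y))/(A*A))
  + x/(x+y) * ((phi (A - Wr x (y-1)) + S*(x+(y-1)))/(A*A))
  <= (phi (A - Wr x y) + S*(x+y))/(A*A).
Proof.
  intros HA Hx Hy HSx HSy.
  set (u := A - Wr x y).
  set (r := Rmax 0 u).
  assert (Hr : 0 <= r) by apply Rmax_l.
  pose proof (phi_ineq u (2 - 2*x)) as H1.
  pose proof (phi_ineq u (2*y)) as H2.
  replace (u - (2 - 2*x)) with (A - Wr (x-1) y) in H1 by (unfold u, Wr; ring).
  replace (u - 2*y) with (A - Wr x (y-1)) in H2 by (unfold u, Wr; ring).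
  fold r in H1, H2.
  set (P1 := phi (A - Wr (x-1) y)) in *.
  set (P2 := phi (A - Wr x (y-1))) in *.
  assert (K : y*P1 + x*P2 <= (phi u + S)*(x+y)).
  { assert (y*P1 <= y*(phi u - 2*r*(2-2*x) + (2-2*x)*(2-2*x))) by (apply Rmult_le_compat_l; lra).
    assert (x*P2 <= x*(phi u - 2*r*(2*y) + (2*y)*(2*y))) by (apply Rmult_le_compat_l; lra).
    nra. }
  assert (AA : 0 < A*A) by nra.
  replace (y/(x+y) * ((P1 + S*((x-1)+y))/(A*A)) + x/(x+y) * ((P2 + S*(x+(y-1)))/(A*A)))
    with (((y*P1 + x*P2)/(x+y) + S*(x+y-1))/(A*A)) by (field; lra).
  unfold Rdiv. apply Rmult_le_compat_r; [left; apply Rinv_0_lt_compat; lra|].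
  assert ((y*P1 + x*P2)/(x+y) <= phi u + S) by (apply le_div_l; lra).
  lra.
Qed.

Definition F (M N0 : nat) (A : R) (m n : nat) :=
  (phi (A - Wr (INR m) (INR n)) + 4*(INR M + INR N0)^2 * (INR m + INR n)) / (A*A).

Lemma bound M N0 A : 0 < A -> forall m n, (m <= M)%nat -> (n <= N0)%nat -> p m n <= F M N0 A m n.
Proof.
  intros HA m. assert (AA : 0 < A*A) by nra.
  assert (HM : 0 <= INR M) by apply pos_INR.
  assert (HN : 0 <= INR N0) by apply pos_INR.
  induction m as [|m IHm]; intros n Hm Hn.
  - simpl p. unfold F. apply le_div_r; [lra|].
    pose proof (pos_INR n).
    replace (A - Wr (INR 0) (INR n)) with (A + (INR n * INR n + INR n)) by (unfold Wr; simpl; ring).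
    unfold phi. rewrite Rmax_right by nra.
    assert (0 <= 4 * (INR M + INR N0)^2 * (INR 0 + INR n)).
    { simpl INR. apply Rmult_le_pos; [nra|lra]. }
    nra.
  - induction n as [|n IHn].
    + simpl p. unfold F. unfold Rdiv. apply Rmult_le_pos; [|left; apply Rinv_0_lt_compat; lra].
      simpl (INR 0). pose proof (phi_nonneg (A - Wr (INR (S m)) 0)).
      pose proof (pos_INR (S m)).
      assert (0 <= 4 * (INR M + INR N0)^2 * (INR (S m) + 0)) by (apply Rmult_le_pos; nra).
      lra.
    + rewrite p_SS.
      assert (I1 : p m (S n) <= F M N0 A m (S n)) by (apply IHm; lia).
      assert (I2 : p (S m) n <= F M N0 A (S m) n) by (apply IHn; lia).
      set (x := INR (S m)) in *. set (y := INR (S n)) in *.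
      assert (Hx : 1 <= x) by (unfold x; rewrite S_INR; pose proof (pos_INR m); lra).
      assert (Hy : 1 <= y) by (unfold y; rewrite S_INR; pose proof (pos_INR n); lra).
      assert (HxM : x <= INR M) by (apply le_INR; lia).
      assert (HyN : y <= INR N0) by (apply le_INR; lia).
      assert (w1 : 0 <= y/(x+y)) by (apply Rlt_le, Rdiv_lt_0_compat; lra).
      assert (w2 : 0 <= x/(x+y)) by (apply Rlt_le, Rdiv_lt_0_compat; lra).
      apply Rle_trans with (y/(x+y) * F M N0 A m (S n) + x/(x+y) * F M N0 A (S m) n).
      { apply Rplus_le_compat; apply Rmult_le_compat_l; assumption. }
      unfold F. fold x y.
      assert (Em : INR m = x - 1) by (unfold x; rewrite S_INR; ring).
      assert (En : INR n = y - 1) by (unfold y; rewrite S_INR; ring).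
      rewrite Em, En.
      apply step; try lra; nra.
Qed.

Lemma bound_ab a b : 0 < Wr (INR a) (INR b) ->
  p a b <= 4 * (INR a + INR b)^3 / (Wr (INR a) (INR b) * Wr (INR a) (INR b)).
Proof.
  intros H.
  eapply Rle_trans; [apply (bound a b (Wr (INR a) (INR b)) H a b); lia|].
  unfold F. rewrite Rminus_diag. unfold phi. rewrite Rmax_left by lra.
  right. f_equal. ring.
Qed.

Lemma lim0 (a b : nat -> nat) (x0 y0 : R)
  (hx : Un_cv (fun N => INR (a N) / INR N) x0)
  (hy : Un_cv (fun N => INR (b N) / INR N) y0)
  (hy0 : 0 < y0) (hxy : y0 < x0) :
  Un_cv (fun N => p (a N) (b N)) 0.
Proof.
  intros eps Heps.
  set (d := Rmin ((x0-y0)/4) (1/2)).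
  assert (Hd1 : d <= (x0-y0)/4) by apply Rmin_l.
  assert (Hd2 : d <= 1/2) by apply Rmin_r.
  assert (Hd0 : 0 < d) by (apply Rmin_glb_lt; lra).
  destruct (hx d Hd0) as [N1 H1].
  destruct (hy d Hd0) as [N2 H2].
  set (c := (x0*x0 - y0*y0)/2).
  assert (Hc : 0 < c) by (unfold c; nra).
  set (T := x0 + y0 + 1).
  assert (HT : 0 < T) by (unfold T; lra).
  destruct (nat_unbounded (2*T/c + 16*T^3/(c*c*eps))) as [N3 H3].
  assert (Q1 : 0 <= 2*T/c) by (apply Rlt_le, Rdiv_lt_0_compat; lra).
  assert (Q2 : 0 <= 16*T^3/(c*c*eps)).
  { apply Rlt_le, Rdiv_lt_0_compat; [|apply Rmult_lt_0_compat; nra]. 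
    apply Rmult_lt_0_compat; [lra| apply pow_lt; lra]. }
  exists (max N1 (max N2 (max N3 1))). intros N HN.
  specialize (H1 N ltac:(lia)). specialize (H2 N ltac:(lia)).
  unfold R_dist in *. rewrite Rminus_0_r.
  rewrite Rabs_right by (apply Rle_ge, p_nonneg).
  apply Rabs_def2 in H1. apply Rabs_def2 in H2.
  set (n := INR N) in *.
  assert (Hn3 : INR N3 <= n) by (apply le_INR; lia).
  assert (Hn1 : 1 <= n) by (change 1 with (INR 1); apply le_INR; lia).
  set (A := INR (a N)) in *. set (B := INR (b N)) in *.
  assert (HA0 : 0 <= A) by apply pos_INR.
  assert (HB0 : 0 <= B) by apply pos_INR.
  assert (EA : A = (A/n)*n) by (field; lra).
  assert (EB : B = (B/n)*n) by (field; lra).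
  assert (Alo : (x0 - d)*n <= A) by (rewrite EA; apply Rmult_le_compat_r; lra).
  assert (Ahi : A <= (x0 + d)*n) by (rewrite EA; apply Rmult_le_compat_r; lra).
  assert (Bhi : B <= (y0 + d)*n) by (rewrite EB; apply Rmult_le_compat_r; lra).
  assert (ABhi : A + B <= T*n) by (unfold T; nra).
  assert (A2 : (x0-d)*n*((x0-d)*n) <= A*A) by (apply Rmult_le_compat; nra).
  assert (B2 : B*B <= (y0+d)*n*((y0+d)*n)) by (apply Rmult_le_compat; nra).
  assert (Dif : c*(n*n) <= A*A - B*B).
  { assert (c <= (x0-d)*(x0-d) - (y0+d)*(y0+d)) by (unfold c; nra). nra. }
  assert (Tn : T*n <= c*(n*n)/2).
  { assert (2*T/c <= n) by lra.
    assert (2*T <= n*c) by (apply (Rmult_le_reg_r (/c)); [apply Rinv_0_lt_compat; lra|];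
      replace (n*c*/c) with n by (field; lra); unfold Rdiv in *; lra).
    nra. }
  assert (HW : c*(n*n)/2 <= Wr A B) by (unfold Wr; lra).
  assert (HWp : 0 < Wr A B) by nra.
  eapply Rle_lt_trans; [apply bound_ab; exact HWp|].
  fold A B.
  assert (Cube : (A+B)^3 <= (T*n)^3) by (apply pow_incr; lra).
  assert (Sq : (c*(n*n)/2)*(c*(n*n)/2) <= Wr A B * Wr A B) by (apply Rmult_le_compat; nra).
  assert (Hcn : 0 < c*(n*n)/2) by nra.
  apply Rle_lt_trans with (4*(T*n)^3 / ((c*(n*n)/2)*(c*(n*n)/2))).
  { unfold Rdiv. apply Rmult_le_compat.
    - pose proof (pow_le (A+B) 3 ltac:(lra)). lra.
    - left; apply Rinv_0_lt_compat; nra.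
    - lra.
    - apply Rinv_le_contravar; nra. }
  replace (4*(T*n)^3 / ((c*(n*n)/2)*(c*(n*n)/2))) with ((16*T^3/(c*c)) / n) by (field; lra).
  assert (16*T^3/(c*c*eps) < n) by lra.
  apply (Rmult_lt_reg_r n); [lra|].
  replace (16*T^3/(c*c)/n*n) with ((16*T^3/(c*c*eps))*eps) by (field; lra).
  nra.
Qed.

Theorem mainTheorem8 (a b : nat -> nat) (x0 y0 : R)
  (ha : forall N : nat, (0 < N)%nat -> (0 < a N)%nat)
  (hb : forall N : nat, (0 < N)%nat -> (0 < b N)%nat)
  (hx : Un_cv (fun N => INR (a N) / INR N) x0)
  (hy : Un_cv (fun N => INR (b N) / INR N) y0)
  (hx0 : 0 < x0) (hy0 : 0 < y0) (hxy : x0 <> y0) :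
  Un_cv (fun N => p (a N) (b N)) (ind_lt x0 y0).
Proof.
  unfold ind_lt. destruct (Rlt_dec x0 y0) as [Hlt|Hge].
  - pose proof (lim0 b a y0 x0 hy hx hx0 Hlt) as L.
    intros eps Heps. destruct (L eps Heps) as [N0 HN0].
    exists (max N0 1). intros N HN.
    specialize (HN0 N ltac:(lia)). unfold R_dist in *.
    assert (E : p (a N) (b N) = 1 - p (b N) (a N)).
    { pose proof (p_sym (a N + b N) (a N) (b N) eq_refl) as S.
      specialize (ha N ltac:(lia)). specialize (S ltac:(lia)). lra. }
    rewrite E. replace (1 - p (b N) (a N) - 1) with (- (p (b N) (a N) - 0)) by ring.
    rewrite Rabs_Ropp. exact HN0.
  - apply (lim0 a b x0 y0 hx hy hy0). lra.
Qed.
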